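(* Let $\alpha\ge4$, let $N_2=\{i_1,\dots,i_v\}$ be a finite set with reals $y'_i\in[\frac{\alpha-1}{\alpha},1)$ and weights $w_i\ge0$ ordered so that $w_{i_1}\le w_{i_2}\le\dots\le w_{i_v}$, and suppose $Y:=\sum_{i\in N_2}y'_i\le v-1$. Run the procedure below producing $\hat y$. Then: (i) the procedure terminates at some $r>1$; (ii) every $\hat y_i$ ($i\in N_2$) satisfies $\hat y_i=1$ or $\frac{\alpha-2}{\alpha}<\hat y_i\le\frac{\alpha-1}{\alpha}$, and $\hat y_i=\frac{\alpha-1}{\alpha}$ or $\hat y_i=1$ for every $i\ne i_1$ (so at most one $i$ has $\frac{\alpha-2}{\alpha}<\hat y_i<\frac{\alpha-1}{\alpha}$); (iii) $\sum_{i\in N_2}\hat y_i=\sum_{i\in N_2}y'_i$; (iv) $\sum_{i\in N_2}(1-\hat y_i)w_i\le\sum_{i\in N_2}(1-y'_i)w_i$.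
   Context: Procedure: initially set $\hat y_i=\frac{\alpha-1}{\alpha}$ for all $i\in N_2$ and $Y'=Y-\sum_{i\in N_2}\hat y_i$. For $r=v,v-1,\dots,1$: if $Y'=0$, terminate; if $Y'>0$ and $Y'+\hat y_{i_r}<1$, set $\hat y_{i_1}\leftarrow\hat y_{i_1}-(1-Y'-\hat y_{i_r})$ and $\hat y_{i_r}\leftarrow1$, and terminate; if $Y'>0$ and $Y'+\hat y_{i_r}\ge1$, set $\hat y_{i_r}\leftarrow1$ and update $Y'\leftarrow Y-\sum_{i\in N_2}\hat y_i$. (In the paper $w_i=d'_ic_{s(i)i}$, but the statement holds for arbitrary nonnegative weights.) *)

(* Defs.v *)
From HB Require Import structures.
From mathcomp Require Import all_boot all_order all_algebra.
Set Implicit Arguments. Unset Strict Implicit. Unset Printing Implicit Defensive.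
Import Order.TTheory GRing.Theory Num.Theory.
Local Open Scope ring_scope.

(* N_2 = {i_1,...,i_v} is relabelled as the naturals 1..v, with i_r := r.
   Functions on N_2 are functions nat -> R (only values on 1..v matter). *)

Definition setf (R : Type) (f : nat -> R) (j : nat) (x : R) : nat -> R :=
  fun i => if i == j then x else f i.

Definition sumN2 (R : numFieldType) (v : nat) (f : nat -> R) : R :=
  \sum_(1 <= i < v.+1) f i.

(* Returns the current yhat together with
   [Some r] if the procedure terminated at step r, or [None] if the loop ran out
   without terminating (or hit the unspecified case Y' < 0). *)
Fixpoint proc_loop (R : numFieldType) (Y : R) (v k : nat) (yh : nat -> R)
  : (nat -> R) * option nat :=
  match k with
  | 0 => (yh, None)
  | k'.+1 =>
    let Y' := Y - sumN2 v yh in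
    if Y' == 0 then (yh, Some k)
    else if 0 < Y' then
      if Y' + yh k < 1 then
        (setf (setf yh 1 (yh 1%N - (1 - Y' - yh k))) k 1, Some k)
      else proc_loop Y v k' (setf yh k 1)
    else (yh, None)
  end.

Definition procedure (R : numFieldType) (alpha : R) (v : nat) (y' : nat -> R)
  : (nat -> R) * option nat :=
  proc_loop (sumN2 v y') v v (fun _ => (alpha - 1) / alpha).

(* Main.v *)
Require Import Defs.
From HB Require Import structures.
From mathcomp Require Import all_boot all_order all_algebra.
From mathcomp Require Import ring lra zify.
Import Order.TTheory GRing.Theory Num.Theory.
Local Open Scope ring_scope.

Lemma sum_setf (R : numFieldType) v (f : nat -> R) j x :
  (1 <= j <= v)%N -> sumN2 v (setf f j x) = sumN2 v f + (x - f j).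
Proof.
move=> hj; rewrite /sumN2.
have hm : j \in index_iota 1 v.+1 by rewrite mem_index_iota ltnS.
rewrite (bigD1_seq j) ?iota_uniq //= [in RHS](bigD1_seq j) ?iota_uniq //=.
rewrite {1}/setf eqxx.
rewrite (eq_bigr (fun i => f i)); last by move=> i hi; rewrite /setf (negbTE hi).
ring.
Qed.

Lemma sum_const (R : numFieldType) v (c : R) : sumN2 v (fun _ => c) = v%:R * c.
Proof.
rewrite /sumN2 big_const_nat subSS subn0.
elim: v => [|v IH]; first by rewrite mul0r.
by rewrite iterS IH mulrSr mulrDl mul1r addrC.
Qed.

Lemma two_le (R : realFieldType) (c : R) k :
  3/4 <= c -> c < 1 -> 0 <= k%:R * (1 - c) - 1 -> (1 < k)%N.
Proof.
move=> h1 h2 h3; rewrite ltnNge; apply/negP => hk.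
have hk' : k%:R <= 1 :> R by rewrite -[1]/(1%:R) ler_nat.
have hk0 : 0 <= k%:R :> R by apply: ler0n.
nra.
Qed.

Lemma loop (R : realFieldType) (c Y : R) v k (yh : nat -> R) :
  3/4 <= c -> c < 1 -> (k <= v)%N ->
  (forall i, (1 <= i <= v)%N -> yh i = if (k < i)%N then 1 else c) ->
  0 <= Y - sumN2 v yh -> Y - sumN2 v yh <= k%:R * (1 - c) - 1 ->
  exists r m, (proc_loop Y v k yh).2 = Some r /\ (1 < r)%N /\ (1 <= m <= v)%N /\
   sumN2 v (proc_loop Y v k yh).1 = Y /\
   forall i, (1 <= i <= v)%N ->
     ((i <= m)%N -> 2*c - 1 < (proc_loop Y v k yh).1 i <= c /\
                    ((2 <= i)%N -> (proc_loop Y v k yh).1 i = c))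
     /\ ((m < i)%N -> (proc_loop Y v k yh).1 i = 1).
Proof.
move=> hc1 hc2; elim: k yh => [|k IH] yh hkv hyh hD0 hD1.
  by exfalso; rewrite mul0r sub0r in hD1; lra.
have k2 := @two_le R c k.+1 hc1 hc2 (le_trans hD0 hD1).
have hyk : yh k.+1 = c by rewrite hyh ?ltnn //; lia.
rewrite /=.
set D := Y - sumN2 v yh.
have [hD|hD] := boolP (D == 0); rewrite ?hD ?(negbTE hD).
  exists k.+1, k.+1; split=> //; split=> //; split; first lia.
  split; first by move/eqP: hD; rewrite /D; lra.
  move=> i hi /=; rewrite hyh //; split.
    move=> hik; rewrite ltnNge hik /=; split; last by [].
    by apply/andP; split; lra.
  by move=> hik; rewrite hik.
have hDp : 0 < D.
  by rewrite lt_neqAle hD0 andbT; by rewrite eq_sym.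
rewrite hDp.
case: ifP => hDc.
  exists k.+1, k; split=> //; split=> //; split; first lia.
  rewrite hyk in hDc *.
  have hy1 : yh 1%N = c by rewrite hyh //; lia.
  split.
    rewrite sum_setf; last lia.
    rewrite sum_setf; last lia.
    rewrite /setf /= hy1.
    have -> : (k.+1 == 1%N) = false by apply/eqP; lia.
    rewrite hyk; rewrite /D; ring.
  move=> i hi; split.
    move=> hik; rewrite /setf /=.
    have -> : (i == k.+1) = false by apply/eqP; lia.
    case: eqP => [->|hi1].
      by rewrite hy1; split; [apply/andP; split; lra | lia].
    rewrite hyh //; have -> : (k.+1 < i)%N = false by lia.
    by split; [apply/andP; split; lra | ].
  move=> hik; rewrite /setf /=.
  case: eqP => // hik1.
  have -> : (i == 1%N) = false by apply/eqP; lia.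
  by rewrite hyh //; have -> : (k.+1 < i)%N = true by lia.
apply: IH; first lia.
- move=> i hi; rewrite /setf; case: eqP => [->|hik]; first by rewrite ltnSn.
  rewrite hyh //; case: (ltngtP k.+1 i) => h //; lia.
- rewrite sum_setf; last lia.
  rewrite hyk -/(sumN2 v yh).
  move: hDc; rewrite hyk => /negbT; rewrite -leNgt => hDc.
  rewrite /D in hDc; lra.
- rewrite sum_setf; last lia.
  rewrite hyk; rewrite /D in hD1; rewrite -[k.+1]addn1 natrD in hD1; lra.
Qed.

Theorem lemma7 (R : realFieldType) (alpha : R) (v : nat) (y' w : nat -> R) :
  4 <= alpha ->
  (forall i : nat, (1 <= i <= v)%N -> (alpha - 1) / alpha <= y' i < 1) ->
  (forall i : nat, (1 <= i <= v)%N -> 0 <= w i) ->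
  (forall i j : nat, (1 <= i)%N -> (i <= j)%N -> (j <= v)%N -> w i <= w j) ->
  sumN2 v y' <= v%:R - 1 ->
  let yh := (procedure alpha v y').1 in
  let stop := (procedure alpha v y').2 in
  (exists r : nat, stop = Some r /\ (1 < r)%N) /\
  (forall i : nat, (1 <= i <= v)%N ->
     yh i = 1 \/ ((alpha - 2) / alpha < yh i /\ yh i <= (alpha - 1) / alpha)) /\
  (forall i : nat, (2 <= i <= v)%N -> yh i = (alpha - 1) / alpha \/ yh i = 1) /\
  sumN2 v yh = sumN2 v y' /\
  sumN2 v (fun i => (1 - yh i) * w i) <= sumN2 v (fun i => (1 - y' i) * w i).
Proof.
move=> ha hy hw hwm hY yh stop.
have ha0 : 0 < alpha by lra.
have han : alpha != 0 by rewrite gt_eqF.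
set c := (alpha - 1) / alpha.
have hc : c = 1 - alpha^-1 by rewrite /c; field.
have hx : alpha^-1 * alpha = 1 by rewrite mulVf.
have hx0 : 0 < alpha^-1 by rewrite invr_gt0.
have hx4 : alpha^-1 <= 1/4 by nra.
have hc1 : 3/4 <= c by lra.
have hc2 : c < 1 by lra.
have h2 : (alpha - 2) / alpha = 2 * c - 1 by rewrite /c; field.
have hyc : forall i, (1 <= i <= v)%N -> c <= y' i by move=> i /hy /andP[].
have hsY : v%:R * c <= sumN2 v y'.
  rewrite -sum_const /sumN2; apply: ler_sum_nat => i hi; apply: hyc; lia.
rewrite /yh /stop /procedure -/c.
have := @loop R c (sumN2 v y') v v (fun _ => c) hc1 hc2 (leqnn v).
case: (proc_loop _ _ _ _) => z s /=.
case.
- by move=> i hi; rewrite ltnNge; case/andP: hi => _ ->.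
- by rewrite sum_const; lra.
- rewrite sum_const; nra.
move=> r [m [hs [hr [hm [hsum hi]]]]].
split; first by exists r.
split.
  move=> i hi'; have [h1 h3] := hi i hi'.
  case: (leqP i m) => him; last by left; apply: h3.
  by right; rewrite h2; have [/andP [a b] _] := h1 him.
split.
  move=> i hi'; have hi1 : (1 <= i <= v)%N.
    by case/andP: hi' => h2i ->; rewrite andbT; exact: ltnW h2i.
  have [h1 h3] := hi i hi1.
  case: (leqP i m) => him; last by right; apply: h3.
  have [_ h4] := h1 him; left; apply: h4; by case/andP: hi'.
split; first by [].
have pw : forall i, (1 <= i <= v)%N ->
    (1 - z i) * w i <= (1 - y' i) * w i + (y' i - z i) * w m.
  move=> i hi'; have [h1 h3] := hi i hi'.
  have [hy1 hy2] := andP (hy i hi').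
  rewrite -subr_ge0.
  have -> : (1 - y' i) * w i + (y' i - z i) * w m - (1 - z i) * w i
          = (y' i - z i) * (w m - w i) by ring.
  case: (leqP i m) => him.
    have [/andP [_ hz] _] := h1 him.
    have hi1 : (1 <= i)%N by case/andP: hi'.
    have hmv : (m <= v)%N by case/andP: hm.
    have := hwm i m hi1 him hmv.
    rewrite -/c in hy1 => hw'; apply: mulr_ge0; rewrite subr_ge0 //.
    exact: le_trans hz hy1.
  have -> : z i = 1 by apply: h3.
  have hm1 : (1 <= m)%N by case/andP: hm.
  have hmi : (m <= i)%N by exact: ltnW.
  have hiv : (i <= v)%N by case/andP: hi'.
  have := hwm m i hm1 hmi hiv => hw'.
  rewrite -mulrNN; apply: mulr_ge0; rewrite oppr_ge0 subr_le0 //; exact: ltW.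
apply: le_trans.
  apply: (@ler_sum_nat R 1 v.+1 _ (fun i => (1 - y' i) * w i + (y' i - z i) * w m)).
  move=> i /andP [a b]; apply: pw; rewrite a; exact: b.
rewrite big_split /= -big_distrl /= sumrB.
rewrite -/(sumN2 v y') -/(sumN2 v z) hsum subrr mul0r addr0.
by [].
Qed.
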